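(* Let $\kappa<\Gamma$ be infinite cardinals and let $f\mapsto\hat f$ be a surjective linear isometry from $X^{\kappa,\Gamma}$ onto $C(K^{\kappa,\Gamma})$ preserving pointwise multiplication and order, $K^{\kappa,\Gamma}$ compact. Then there is a point $p\in K^{\kappa,\Gamma}$ such that $\{\hat f: f\in X_0^{\kappa,\Gamma}\}=C(K^{\kappa,\Gamma},p)$; consequently $X_0^{\kappa,\Gamma}$ is isometric to $C(K^{\kappa,\Gamma},p)$. Moreover, $p$ is a $P$-point of $K^{\kappa,\Gamma}$.
   Context: $X^{\kappa,\Gamma}=\{f\in\ell_\infty(\Gamma):\exists A\subseteq\Gamma,\ |A|=\kappa,\ f|_{\Gamma\setminus A}\text{ is constant}\}$ and $X_0^{\kappa,\Gamma}=\{f\in\ell_\infty(\Gamma):\exists A\subseteq\Gamma,\ |A|=\kappa,\ f|_{\Gamma\setminus A}\equiv 0\}$, both with the sup norm. For compact $K$ and $p\in K$, $C(K,p)=\{f\in C(K):f(p)=0\}$. A point $p\in K$ is a $P$-point if every $g\in C(K)$ is constant on some open neighbourhood of $p$. *)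

(* Defs.v *)
From HB Require Import structures.
From mathcomp Require Import all_boot all_order all_algebra.
From mathcomp Require Import all_classical all_reals all_analysis.
Unset Printing Implicit Defensive.
Import Order.TTheory GRing.Theory Num.Theory.
Import numFieldNormedType.Exports.
Local Open Scope classical_set_scope.
Local Open Scope card_scope.
Local Open Scope ring_scope.

Definition supnorm (R : realType) (T : Type) (f : T -> R) : R :=
  sup [set `|f x| | x in [set: T]].

Definition linfty (R : realType) (G : Type) : set (G -> R) :=
  [set f | exists M : R, forall x, `|f x| <= M].

(* X^{kappa,Gamma}; the cardinal kappa is the cardinality of the type Kap *)
Definition Xkg (R : realType) (Kap G : Type) : set (G -> R) :=
  [set f | linfty R G f /\
     exists A : set G, A #= [set: Kap] /\
       exists c : R, forall x, ~ A x -> f x = c].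

Definition X0kg (R : realType) (Kap G : Type) : set (G -> R) :=
  [set f | linfty R G f /\
     exists A : set G, A #= [set: Kap] /\
       forall x, ~ A x -> f x = 0].

Definition CK (R : realType) (K : topologicalType) : set (K -> R) :=
  [set g | continuous g].
Definition CKp (R : realType) (K : topologicalType) (p : K) : set (K -> R) :=
  [set g | continuous g /\ g p = 0].

Definition P_point (R : realType) (K : topologicalType) (p : K) : Prop :=
  forall g : K -> R, continuous g ->
    exists U : set K, open U /\ U p /\ forall x, U x -> g x = g p.

(* Main.v *)
Require Import Defs.
From HB Require Import structures.
From mathcomp Require Import all_boot all_order all_algebra.
From mathcomp Require Import all_classical all_reals all_analysis.
Import Order.TTheory GRing.Theory Num.Theory.
Import numFieldNormedType.Exports.
Local Open Scope classical_set_scope.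
Local Open Scope card_scope.
Local Open Scope ring_scope.

From mathcomp Require Import zify ring lra.
Lemma card_le_fun T U (A : set T) (B : set U) (u0 : U) : A #<= B ->
  exists f : T -> U, (forall x, A x -> B (f x)) /\
    (forall x y, A x -> A y -> f x = f y -> x = y).
Proof.
move/card_leP => [g].
exists (fun x => match pselect (A x) with left h => val (g (exist _ x (mem_set h))) | right _ => u0 end).
split.
  move=> x Ax; case: pselect => // h; exact: set_mem (valP _).
move=> x y Ax Ay; case: pselect => // hx; case: pselect => // hy.
move=> /val_inj/('inj_g) => H.
by have := H (mem_set I) (mem_set I) => /(congr1 val).
Qed.

Arguments card_le_fun {T U A B} u0 _.

Lemma fun_card_le T U (A : set T) (B : set U) (f : T -> U) :
  (forall x, A x -> B (f x)) ->
  (forall x y, A x -> A y -> f x = f y -> x = y) -> A #<= B.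
Proof.
move=> fAB finj.
have : $|{injfun A >-> B}|.
  apply/injfunPex; exists f => //.
  by move=> x y /set_mem Ax /set_mem Ay; exact: finj.
by case=> g; exact: inj_card_le g.
Qed.

Section Double.
Variable Kap : Type.
Let Pw (W : set ((bool * Kap) * Kap)) : Prop :=
  [/\ (forall x y y', W (x,y) -> W (x,y') -> y = y'),
      (forall x x' y, W (x,y) -> W (x',y) -> x = x'),
      (forall b k y, W ((b,k),y) -> (exists z, W ((true,k),z)) /\ (exists z, W ((true,y),z))) &
      (forall k, (exists z, W ((true,k),z)) -> forall b, exists z, W ((b,k),z))].

Let chainP : forall F : set (set ((bool * Kap) * Kap)),
  F `<=` Pw -> total_on F subset -> Pw (\bigcup_(X in F) X).
Proof.
move=> F FP Ftot; split.
- move=> x y y' [X1 F1 h1] [X2 F2 h2].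
  case: (Ftot _ _ F1 F2) => sub.
    by case: (FP _ F2) => P1 _ _ _; apply: P1 (sub _ h1) h2.
  by case: (FP _ F1) => P1 _ _ _; apply: P1 h1 (sub _ h2).
- move=> x x' y [X1 F1 h1] [X2 F2 h2].
  case: (Ftot _ _ F1 F2) => sub.
    by case: (FP _ F2) => _ P2 _ _; apply: P2 (sub _ h1) h2.
  by case: (FP _ F1) => _ P2 _ _; apply: P2 h1 (sub _ h2).
- move=> b k y [X1 F1 h1].
  case: (FP _ F1) => _ _ P3 _; case: (P3 _ _ _ h1) => [[z hz] [z' hz']].
  by split; [exists z | exists z']; exists X1.
- move=> k [z [X1 F1 h1]] b.
  case: (FP _ F1) => _ _ _ P4; case: (P4 k (ex_intro _ z h1) b) => z' hz'.
  by exists z'; exists X1.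
Qed.

Lemma double_inj : infinite_set [set: Kap] -> exists j : bool * Kap -> Kap, injective j.
Proof.
move=> Kinf; have [k0 _] := infinite_setN0 Kinf.
have [W0 [[P1 P2 P3 P4] W0max]] := Zorn_bigcup chainP.
pose S k := exists z, W0 ((true,k),z).
have finS : finite_set (~` S).
  apply: contrapT => /infiniteP /(card_le_fun k0) [e [eS einj]].
  have einj' : forall n m, e n = e m -> n = m by move=> n m; apply: einj.
  pose W' := W0 `|` [set p | exists n (b : bool), p = ((b, e n), e (2 * n + b)%N)].
  apply: (W0max W').
    split; first by move=> p Wp; left.
    move=> /(_ ((true, e 0%N), e (2 * 0 + true)%N)) H.
    have : W0 ((true, e 0%N), e (2 * 0 + true)%N) by apply: H; right; exists 0%N, true.
    by move=> h; apply: (eS 0%N I); exists (e 1%N).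
  split.
  - move=> x y y' [h|[n [b /pair_equal_spec[-> ->]]]] [h'|[n' [b' /pair_equal_spec[e1 ->]]]].
    + exact: P1 h h'.
    + move: h; rewrite e1 => h; case: (P3 _ _ _ h) => -[z hz] _.
      by case: (eS n' I); exists z.
    + move: h' => h; case: (P3 _ _ _ h) => -[z hz] _.
      by case: (eS n I); exists z.
    + move: e1 => /pair_equal_spec[-> /einj']; by move=> ->.
  - move=> x x' y [h|[n [b /pair_equal_spec[-> e1]]]] [h'|[n' [b' /pair_equal_spec[-> e2]]]].
    + exact: P2 h h'.
    + move: h; case: x => xb xk h; case: (P3 _ _ _ h) => _ [z hz]; case: (eS (2 * n' + b')%N I); exists z.
      by rewrite -e2.
    + move: h'; case: x' => xb xk h; case: (P3 _ _ _ h) => _ [z hz]; case: (eS (2 * n + b)%N I); exists z.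
      by rewrite -e1.
    + have := einj' _ _ (etrans (esym e1) e2) => E.
      have [Eb En] : b = b' /\ n = n' by move: E; clear e1 e2; case: b; case: b' => /=; lia.
      by subst b' n'.
  - move=> b k y [h|[n [b' /pair_equal_spec[/pair_equal_spec[_ ->] ->]]]].
      case: (P3 _ _ _ h) => [[z hz] [z' hz']].
      by split; [exists z | exists z']; left.
    split; first by exists (e (2 * n + true)%N); right; exists n, true.
    by exists (e (2 * (2 * n + b') + true)%N); right; exists (2 * n + b')%N, true.
  - move=> k [z [h|[n [b' /pair_equal_spec[/pair_equal_spec[_ ->] _]]]]] b.
      by case: (P4 k (ex_intro _ z h) b) => z' hz'; exists z'; left.
    by exists (e (2 * n + b)%N); right; exists n, b.
have Sinf : infinite_set S.
  move=> Sfin; apply: Kinf; rewrite -(setUv S) finite_setU; by split.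
have [e [eS einj]] := card_le_fun k0 (iffLR (infiniteP S) Sinf).
have einj' : forall n m, e n = e m -> n = m by move=> n m; apply: einj.
have [d [_ dinj]] := card_le_fun 0%N (finite_set_countable finS).
have [w wP0] : exists w : bool * Kap -> Kap,
    forall x, (exists z, W0 (x,z)) -> W0 (x, w x).
  have H : forall x, exists y, (exists z, W0 (x,z)) -> W0 (x, y).
    move=> x; case: (pselect (exists z, W0 (x,z))) => [[z hz]|h]; first by exists z.
    by exists k0.
  by have [f fP] := boolp.choice H; exists f.
have wP : forall b k, S k -> W0 ((b,k), w (b,k)).
  by move=> b k Sk; apply: wP0; exact: P4.
have [ei eiP] : exists ei : Kap -> nat, forall k, (exists n, e n = k) -> e (ei k) = k.
  have H : forall k, exists n, (exists n, e n = k) -> e n = k.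
    move=> k; case: (pselect (exists n, e n = k)) => [[n hn]|h]; first by exists n.
    by exists 0%N.
  by have [f fP] := boolp.choice H; exists f.
pose r k := if `[< S k >] then (if `[< exists n, e n = k >] then e (2 * ei k + 1)%N else k)
            else e (2 * d k)%N.
have rS : forall k, S (r k).
  move=> k; rewrite /r; case: asboolP => Sk; last exact: eS.
  by case: asboolP => // h; exact: eS.
have rinj : injective r.
  move=> k k'; rewrite /r.
  case: (asboolP (S k)) => Sk; case: (asboolP (S k')) => Sk'.
  - case: (asboolP (exists n, e n = k)) => h; case: (asboolP (exists n, e n = k')) => h'.
    + move/einj' => E.
      have E' : ei k = ei k' by lia.
      by rewrite -(eiP _ h) -(eiP _ h') E'.
    + by move=> E; case: h'; exists (2 * ei k + 1)%N.
    + by move=> E; case: h; exists (2 * ei k' + 1)%N.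
    + by [].
  - case: (asboolP (exists n, e n = k)) => h.
      by move/einj'; lia.
    by move=> E; case: h; exists (2 * d k')%N.
  - case: (asboolP (exists n, e n = k')) => h.
      by move/einj'; lia.
    by move=> E; case: h; exists (2 * d k)%N.
  - by move/einj'=> E; apply: dinj => //; lia.
exists (fun x => w (x.1, r x.2)) => -[b k] [b' k'] /= E.
have h1 := wP b _ (rS k); have h2 := wP b' _ (rS k'); rewrite -E in h2.
by case: (P2 _ _ _ h1 h2) => -> /rinj ->.
Qed.
End Double.

Lemma union_le (Kap G : Type) (A B : set G) : infinite_set [set: Kap] ->
  A #<= [set: Kap] -> B #<= [set: Kap] -> A `|` B #<= [set: Kap].
Proof.
move=> Kinf hA hB; have [k0 _] := infinite_setN0 Kinf.
have [j jinj] := double_inj _ Kinf.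
have [fA [_ fAi]] := card_le_fun k0 hA.
have [fB [_ fBi]] := card_le_fun k0 hB.
apply: (@fun_card_le _ _ _ _ (fun x => if `[< A x >] then j (true, fA x) else j (false, fB x))) => //.
move=> x y Hx Hy.
case: (asboolP (A x)) => ax; case: (asboolP (A y)) => ay /jinj /pair_equal_spec [//].
- by move=> E; apply: fAi.
- by move=> E; apply: fBi => //; [case: Hx|case: Hy].
Qed.

Lemma union_eq (Kap G : Type) (A B : set G) : infinite_set [set: Kap] ->
  A #= [set: Kap] -> B #= [set: Kap] -> A `|` B #= [set: Kap].
Proof.
move=> Kinf; rewrite !card_eq_le => /andP[hA hA'] /andP[hB _].
apply/andP; split; first exact: union_le.
apply: card_le_trans hA' (subset_card_le _); exact: subsetUl.
Qed.

Lemma sup_sub0 (R : realType) (S : set R) : S `<=` [set 0%R] -> sup S = 0%R.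
Proof.
move=> sub; case: (pselect (S 0%R)) => h.
  have -> : S = [set 0%R] by apply/seteqP; split => // x /= ->.
  exact: sup1.
have -> : S = set0 by apply/seteqP; split => // x Sx; case: h; rewrite -(sub _ Sx).
exact: sup0.
Qed.

Lemma idem01 (R : realType) (x : R) : x = x * x -> x = 0 \/ x = 1.
Proof.
move=> h; have : x * (x - 1) == 0 by rewrite mulrBr mulr1 -h subrr.
by rewrite mulf_eq0 => /orP[/eqP->|]; [left|rewrite subr_eq0 => /eqP->; right].
Qed.

Theorem mainTheorem10 (R : realType) (Kap G : Type) (K : topologicalType)
  (T : (G -> R) -> (K -> R))
  (kap_inf : infinite_set [set: Kap])
  (G_inf : infinite_set [set: G])
  (kap_le : [set: Kap] #<= [set: G])
  (kap_lt : ~ ([set: G] #<= [set: Kap]))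
  (K_compact : compact [set: K])
  (K_hausdorff : hausdorff_space K)
  (T_into : forall f, Xkg R Kap G f -> continuous (T f))
  (T_onto : forall g : K -> R, continuous g -> exists2 f, Xkg R Kap G f & T f = g)
  (T_lin : forall (a : R) f g, Xkg R Kap G f -> Xkg R Kap G g ->
             T (fun x => a * f x + g x) = (fun k => a * T f k + T g k))
  (T_isom : forall f g, Xkg R Kap G f -> Xkg R Kap G g ->
             supnorm R K (fun k => T f k - T g k) = supnorm R G (fun x => f x - g x))
  (T_mul : forall f g, Xkg R Kap G f -> Xkg R Kap G g ->
             T (fun x => f x * g x) = (fun k => T f k * T g k))
  (T_ord : forall f g, Xkg R Kap G f -> Xkg R Kap G g ->
             (forall x, f x <= g x) -> forall k, T f k <= T g k) :
  exists p : K,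
    [/\ T @` X0kg R Kap G = CKp R K p,
        (exists phi : (G -> R) -> (K -> R),
           [/\ phi @` X0kg R Kap G = CKp R K p,
               (forall (a : R) f g, X0kg R Kap G f -> X0kg R Kap G g ->
                  phi (fun x => a * f x + g x) = (fun k => a * phi f k + phi g k))
             & (forall f g, X0kg R Kap G f -> X0kg R Kap G g ->
                  supnorm R K (fun k => phi f k - phi g k) = supnorm R G (fun x => f x - g x))])
      & P_point R K p].
Proof.
have [g0 _] := infinite_setN0 G_inf.
pose D := [set A : set G | A #= [set: Kap]].
have D0 : exists A, D A.
  have [i [_ iinj]] := card_le_fun g0 kap_le.
  exists (i @` setT); rewrite /D.
  apply: inj_card_eq => x y _ _; exact: iinj.
have Dout : forall A, D A -> exists x, ~ A x.
  move=> A DA; apply: contrapT => H; apply: kap_lt.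
  have -> : [set: G] = A by apply/seteqP; split => // x _; apply: contrapT => nx; apply: H; exists x.
  by have : A #= [set: Kap] := DA; rewrite card_eq_le => /andP[].
have DU : forall A B, D A -> D B -> D (A `|` B) by move=> A B; exact: union_eq.
pose e (A : set G) : G -> R := fun x => if `[< A x >] then 0 else 1.
have Xe : forall A, D A -> Xkg R Kap G (e A).
  move=> A DA; split.
    by exists 1 => x; rewrite /e; case: asboolP => _; rewrite ?normr0 ?normr1.
  exists A; split => //; exists 1 => x nx; rewrite /e; by case: asboolP.
have X0 : Xkg R Kap G (fun _ => 0).
  have [A DA] := D0; split; first by exists 0 => x; rewrite normr0.
  by exists A; split => //; exists 0.
have T0 : T (fun _ => 0) = (fun _ => 0).
  have := T_lin (-1) _ _ X0 X0.
  have -> : (fun x : G => -1 * 0 + 0) = (fun _ => 0 : R) by apply: funext => x; rewrite mulr0 addr0.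
  move=> ->; apply: funext => k; by rewrite mulN1r addNr.
have hidem : forall A, D A -> forall k, T (e A) k = 0 \/ T (e A) k = 1.
  move=> A DA k; apply: idem01.
  have := T_mul _ _ (Xe A DA) (Xe A DA).
  have -> : (fun x => e A x * e A x) = e A.
    by apply: funext => x; rewrite /e; case: asboolP => _; rewrite ?mulr0 ?mulr1.
  by move=> /(congr1 (fun h => h k)).
have hsub : forall A B, D A -> D B -> A `<=` B -> forall k, T (e B) k = 1 -> T (e A) k = 1.
  move=> A B DA DB AB k hk.
  have := T_mul _ _ (Xe B DB) (Xe A DA).
  have -> : (fun x => e B x * e A x) = e B.
    apply: funext => x; rewrite /e; case: asboolP => bx; first by rewrite mul0r.
    by case: asboolP => ax; [case: bx; apply: AB | rewrite mulr1].
  by move=> /(congr1 (fun h => h k)) /=; rewrite hk mul1r.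
pose U A := [set k | T (e A) k = 1].
have Ucl : forall A, D A -> closed (U A).
  move=> A DA.
  have -> : U A = T (e A) @^-1` [set x | 1 <= x].
    apply/seteqP; split => k /=; first by move=> ->.
    by case: (hidem A DA k) => h; rewrite /U /= h // ler10.
  by apply: (iffLR (continuous_closedP _) (T_into _ (Xe A DA))); exact: closed_ge.
have Uop : forall A, D A -> open (U A).
  move=> A DA.
  have -> : U A = T (e A) @^-1` [set x | 0 < x].
    apply/seteqP; split => k /=; first by move=> ->.
    by case: (hidem A DA k) => h; rewrite /U /= h // ltxx.
  by apply: (iffLR (continuousP _) (T_into _ (Xe A DA))); exact: open_gt.
have Une : forall A, D A -> U A !=set0.
  move=> A DA; apply: contrapT => H.
  have hz : forall k, T (e A) k = 0.
    by move=> k; case: (hidem A DA k) => // h1; case: H; exists k.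
  have [x0 nx0] := Dout A DA.
  have := T_isom _ _ (Xe A DA) X0; rewrite T0 /supnorm.
  rewrite sup_sub0; last by move=> _ [k _ <-]; rewrite hz subrr normr0.
  move=> E.
  have : 1 <= sup [set `|e A x - 0| | x in [set: G]].
    apply: ub_le_sup.
      exists 1 => _ [x _ <-]; rewrite /e; case: asboolP => _; by rewrite subr0 ?normr0 ?normr1.
    exists x0 => //; rewrite /e; case: asboolP => // _; by rewrite subr0 normr1.
  by rewrite -E ler10.
pose F := filter_from D U.
have FF : ProperFilter F.
  apply: filter_from_proper; last exact: Une.
  apply: (@filter_from_filter _ _ D U D0) => A B DA DB; exists (A `|` B); first exact: DU.
  move=> k Uk; split.
    exact: (hsub A (A `|` B) DA (DU A B DA DB) (@subsetUl _ A B) k Uk).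
  exact: (hsub B (A `|` B) DB (DU A B DA DB) (@subsetUr _ A B) k Uk).
have [p [_ cp]] := K_compact F FF filterT.
have pU : forall A, D A -> U A p.
  move=> A DA; rewrite ((closure_id (U A)).1 (Ucl A DA)).
  by move=> B nB; apply: cp => //; exists A.
have Lp : forall f A c, Xkg R Kap G f -> D A -> (forall x, ~ A x -> f x = c) ->
    forall k, U A k -> T f k = c.
  move=> f A c Xf DA hc k Uk.
  have E1 := T_mul _ _ Xf (Xe A DA).
  have E2 : T (fun x => c * e A x + 0) = fun k => c * T (e A) k + T (fun _ => 0) k :=
    T_lin c _ _ (Xe A DA) X0.
  have Efun : (fun x => f x * e A x) = (fun x => c * e A x + 0).
    apply: funext => x; rewrite /e; case: asboolP => ax; first by rewrite !mulr0 addr0.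
    by rewrite hc // !mulr1 addr0.
  rewrite Efun E2 in E1.
  have := congr1 (fun h => h k) E1; rewrite /= T0.
  have Uk' : T (e A) k = 1 := Uk.
  by rewrite Uk' addr0 !mulr1 => ->.
have X0X : forall f, X0kg R Kap G f -> Xkg R Kap G f.
  move=> f [fb [A [hA h0]]]; split => //; exists A; split => //; by exists 0.
exists p.
have Hset : T @` X0kg R Kap G = CKp R K p.
  apply/seteqP; split.
  - move=> _ [f Xf0 <-]; have Xf := X0X f Xf0.
    case: Xf0 => fb [A [hA h0]]; split; first exact: T_into.
    exact: (Lp f A 0 Xf hA h0 p (pU A hA)).
  - move=> g [gc gp]; have [f Xf Tf] := T_onto g gc.
    case: (Xf) => fb [A [hA [c hc]]].
    have cpc : T f p = c := Lp f A c Xf hA hc p (pU A hA).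
    have c0 : c = 0 by rewrite -cpc Tf.
    exists f => //; split => //; exists A; split => //; by rewrite -c0.
split => //.
  exists T; split => //.
    move=> a f g /X0X Xf /X0X Xg; exact: T_lin.
  move=> f g /X0X Xf /X0X Xg; exact: T_isom.
move=> g gc; have [f Xf Tf] := T_onto g gc.
case: (Xf) => fb [A [hA [c hc]]].
exists (U A); split; first exact: Uop.
split; first exact: pU.
move=> x Ux; rewrite -Tf (Lp f A c Xf hA hc x Ux).
by rewrite (Lp f A c Xf hA hc p (pU A hA)).
Qed.
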